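(* Let $k\ge 2$ be an integer and let $b$ be a nonzero real number. Then $$\Im\left(\sum_{j=0}^{\infty}\frac{1}{(i j+b)^k}\right)=-\frac{(2\pi)^k}{2}\int_{0}^{1}\sum_{j=1}^{k}\frac{c_j(b)\left(u^{k-j}e^{-2\pi b u}-e^{-2\pi b}\right)}{(j-1)!\,(k-j)!}\cot(\pi u)\,du,$$ where $c_j(b)=\delta_{1j}+\mathrm{Li}_{1-j}(e^{-2\pi b})$.
   Context: $i$ denotes the imaginary unit. $\delta_{1j}$ is the Kronecker delta. $\mathrm{Li}_s(z)$ is the polylogarithm, the analytic continuation of $\sum_{m\ge1} z^m/m^s$; for $s=1-j\le 0$ it is a rational function of $z$, defined for $z\ne1$. *)

(* Defs.v *)
From Stdlib Require Import Reals Factorial.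
Open Scope R_scope.

Definition Cmul (z w : R * R) : R * R :=
  (fst z * fst w - snd z * snd w, fst z * snd w + snd z * fst w).
Fixpoint Cpow (z : R * R) (n : nat) : R * R :=
  match n with O => (1, 0) | S m => Cmul z (Cpow z m) end.
Definition Cinv (z : R * R) : R * R :=
  (fst z / (fst z ^ 2 + snd z ^ 2), - snd z / (fst z ^ 2 + snd z ^ 2)).
Definition Im (z : R * R) : R := snd z.

Definition term (k : nat) (b : R) (j : nat) : R * R :=
  Cinv (Cpow (b, INR j) k).

Fixpoint stirling2 (n k : nat) : nat :=
  match n, k with
  | O, O => 1%nat
  | O, S _ => 0%nat
  | S _, O => 0%nat
  | S n', S k' => ((S k') * stirling2 n' (S k') + stirling2 n' k')%nat
  end.

(* Li_{-n}(z), n >= 0, as the rational function (analytic continuation of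
   sum_{m>=1} m^n z^m), defined for z <> 1:
   Li_{-n}(z) = sum_{r=0}^{n} r! S(n+1,r+1) (z/(1-z))^(r+1). *)
Definition Li_neg (n : nat) (z : R) : R :=
  sum_f_R0 (fun r => INR (fact r) * INR (stirling2 (S n) (S r)) * (z / (1 - z)) ^ (S r)) n.

Definition c (j : nat) (b : R) : R :=
  (if Nat.eqb j 1 then 1 else 0) + Li_neg (j - 1) (exp (- 2 * PI * b)).

Definition cot (x : R) : R := cos x / sin x.

Definition integrand (k : nat) (b : R) (u : R) : R :=
  sum_f_R0 (fun i =>
     let j := S i in
     c j b * (u ^ (k - j) * exp (- 2 * PI * b * u) - exp (- 2 * PI * b))
       / (INR (fact (j - 1)) * INR (fact (k - j)))) (k - 1)
  * cot (PI * u).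

Definition improper_integral_01 (f : R -> R) (I : R) : Prop :=
  (forall a b, 0 < a -> a <= b -> b < 1 -> inhabited (Riemann_integrable f a b)) /\
  (forall eps, eps > 0 -> exists delta, delta > 0 /\
     forall a b (pr : Riemann_integrable f a b),
       0 < a < delta -> 1 - delta < b < 1 ->
       Rabs (RiemannInt pr - I) < eps).

(* Main.v *)
From Coquelicot Require Import Coquelicot.
Require Import Defs.
From Stdlib Require Import Reals Lra Lia Factorial.
Open Scope R_scope.

Fixpoint sumk (f : nat -> R) (n : nat) : R :=
  match n with O => 0 | S m => sumk f m + f m end.

Lemma sumk_ext f g n : (forall i, (i < n)%nat -> f i = g i) -> sumk f n = sumk g n.
Proof. induction n; simpl; intros H; [reflexivity|]. rewrite IHn by (intros; apply H; lia). rewrite H by lia. reflexivity. Qed.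

Lemma sumk_plus f g n : sumk (fun i => f i + g i) n = sumk f n + sumk g n.
Proof. induction n; simpl; [lra|]. rewrite IHn. lra. Qed.

Lemma sumk_minus f g n : sumk (fun i => f i - g i) n = sumk f n - sumk g n.
Proof. induction n; simpl; [lra|]. rewrite IHn. lra. Qed.

Lemma sumk_scal a f n : sumk (fun i => a * f i) n = a * sumk f n.
Proof. induction n; simpl; [lra|]. rewrite IHn. lra. Qed.

Lemma sumk_shift f n : sumk f (S n) = f 0%nat + sumk (fun i => f (S i)) n.
Proof. induction n; simpl in *; [lra|]. rewrite IHn. lra. Qed.

Lemma sumk_zero f n : (forall i, (i < n)%nat -> f i = 0) -> sumk f n = 0.
Proof. intros H. rewrite (sumk_ext f (fun _ => 0)) by auto. clear H. induction n; simpl; [lra|rewrite IHn; lra]. Qed.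

Lemma sum_f_R0_sumk f n : sum_f_R0 f n = sumk f (S n).
Proof. induction n; simpl; [lra|]. rewrite IHn. reflexivity. Qed.

Lemma isd_const (a x : R) : is_derive (fun _ : R => a) x 0.
Proof. auto_derive; auto. Qed.
Lemma isd_id (x : R) : is_derive (fun y : R => y) x 1.
Proof. auto_derive; auto. Qed.

Lemma is_derive_sumk (F : nat -> R -> R) (F' : nat -> R) n x :
  (forall i, (i < n)%nat -> is_derive (F i) x (F' i)) ->
  is_derive (fun y => sumk (fun i => F i y) n) x (sumk F' n).
Proof.
  induction n; simpl; intros H.
  - apply isd_const.
  - apply (is_derive_plus (fun y => sumk (fun i => F i y) n) (F n)).
    + apply IHn. intros; apply H; lia.
    + apply H; lia.
Qed.

Definition A (n r : nat) : R := INR (fact r) * INR (stirling2 (S n) (S r)).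
Definition ell (n : nat) (w : R) : R := sumk (fun r => A n r * w ^ (S r)) (S n).
Definition elld (n : nat) (w : R) : R := sumk (fun r => A n r * INR (S r) * w ^ r) (S n).

Lemma stirling_zero n m : (n < m)%nat -> stirling2 n m = 0%nat.
Proof.
  revert m; induction n; intros m Hm.
  - destruct m; [lia|reflexivity].
  - destruct m; [lia|]. simpl. rewrite IHn by lia. rewrite IHn by lia. lia.
Qed.

Lemma stirling_one n : stirling2 (S n) 1 = 1%nat.
Proof. induction n; [reflexivity|]. simpl in *. rewrite IHn. destruct n; reflexivity. Qed.

Lemma Li_ell n z : Li_neg n z = ell n (z / (1 - z)).
Proof. unfold Li_neg, ell, A. rewrite sum_f_R0_sumk. reflexivity. Qed.

Lemma ell_deriv n w : is_derive (ell n) w (elld n w).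
Proof.
  unfold ell, elld.
  apply (is_derive_sumk (fun r y => A n r * y ^ S r) (fun r => A n r * INR (S r) * w ^ r)).
  intros i _. auto_derive; [exact I|]. change (match i with 0%nat => 1 | S _ => INR i + 1 end) with (INR (S i)). ring.
Qed.

Lemma ell_rec n w : ell (S n) w = w * (1 + w) * elld n w.
Proof.
  unfold ell, elld.
  rewrite sumk_shift.
  assert (E1 : forall r, A (S n) (S r) * w ^ S (S r) =
     INR (S (S r)) * A n (S r) * w ^ S (S r) + INR (S r) * A n r * w ^ S (S r)).
  { intros r. unfold A. change (stirling2 (S (S n)) (S (S r))) with
      (S (S r) * stirling2 (S n) (S (S r)) + stirling2 (S n) (S r))%nat.
    rewrite plus_INR, mult_INR. change (fact (S r)) with (S r * fact r)%nat.
    rewrite mult_INR. ring. }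
  rewrite (sumk_ext _ _ _ (fun r _ => E1 r)). rewrite sumk_plus.
  assert (E0 : A (S n) 0 = 1).
  { unfold A. rewrite stirling_one. simpl. ring. }
  rewrite E0.
  assert (E2 : sumk (fun r => INR (S (S r)) * A n (S r) * w ^ S (S r)) (S n) =
               sumk (fun r => INR (S (S r)) * A n (S r) * w ^ S (S r)) n).
  { match goal with |- sumk ?f (S n) = _ => change (sumk f (S n)) with (sumk f n + f n) end.
    cbv beta. unfold A at 2. rewrite (stirling_zero (S n) (S (S n))) by lia.
    change (INR 0) with 0. ring. }
  rewrite E2.
  rewrite <- sumk_scal.
  rewrite (sumk_ext (fun i => w * (1 + w) * (A n i * INR (S i) * w ^ i)) (fun r => A n r * INR (S r) * w ^ S r + A n r * INR (S r) * w ^ S (S r)))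
    by (intros; cbn [pow]; ring).
  rewrite sumk_plus. rewrite (sumk_shift (fun r => A n r * INR (S r) * w ^ S r)).
  assert (E3 : A n 0 = 1). { unfold A. rewrite stirling_one. simpl. ring. }
  rewrite E3.
  rewrite (sumk_ext (fun r => INR (S r) * A n r * w ^ S (S r))
                    (fun r => A n r * INR (S r) * w ^ S (S r))) by (intros; ring).
  rewrite (sumk_ext (fun i => A n (S i) * INR (S (S i)) * w ^ S (S i))
                    (fun r => INR (S (S r)) * A n (S r) * w ^ S (S r))) by (intros; ring).
  cbn [pow INR]. ring.
Qed.

Lemma ell_id n : forall w, ell n w = w * (1 + sumk (fun i => Binomial.C n i * ell i w) n).
Proof.
  induction n; intros w.
  - unfold ell, A. simpl. ring.
  -
    assert (Hd : elld n w = (1 + sumk (fun i => Binomial.C n i * ell i w) n)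
                  + w * sumk (fun i => Binomial.C n i * elld i w) n).
    { pose proof (is_derive_unique _ _ _ (ell_deriv n w)) as H1.
      assert (H2 : is_derive (fun y => y * (1 + sumk (fun i => Binomial.C n i * ell i y) n)) w
                    (1 * (1 + sumk (fun i => Binomial.C n i * ell i w) n)
                     + w * (0 + sumk (fun i => Binomial.C n i * elld i w) n))).
      { apply (is_derive_mult (fun y => y) (fun y => 1 + sumk (fun i => Binomial.C n i * ell i y) n)).
        - apply isd_id.
        - apply (is_derive_plus (fun _ => 1) (fun y => sumk (fun i => Binomial.C n i * ell i y) n)).
          + apply isd_const.
          + apply (is_derive_sumk (fun i y => Binomial.C n i * ell i y)).
            intros i _. apply (is_derive_scal (ell i) w (Binomial.C n i)). apply ell_deriv.
        - intros; unfold mult; simpl; ring. }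
      apply is_derive_unique in H2.
      assert (H3 : Derive (ell n) w = Derive (fun y => y * (1 + sumk (fun i => Binomial.C n i * ell i y) n)) w)
        by (apply Derive_ext; apply IHn).
      rewrite H1 in H3. rewrite H3. etransitivity. apply H2. ring. }
    rewrite ell_rec, Hd.
    rewrite (sumk_shift (fun i => Binomial.C (S n) i * ell i w)).
    rewrite (sumk_ext (fun i => Binomial.C (S n) (S i) * ell (S i) w)
       (fun i => Binomial.C n i * ell (S i) w + Binomial.C n (S i) * ell (S i) w))
      by (intros i Hi; rewrite <- pascal by exact Hi; ring).
    rewrite sumk_plus.
    assert (Hs : sumk (fun i => Binomial.C n (S i) * ell (S i) w) n =
                 sumk (fun i => Binomial.C n i * ell i w) n + ell n w - w).
    { pose proof (sumk_shift (fun i => Binomial.C n i * ell i w) n) as E.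
      simpl in E. rewrite C_n_n, C_n_0 in E.
      replace (ell 0 w) with w in E by (unfold ell, A; simpl; ring). lra. }
    rewrite Hs, C_n_0.
    replace (ell 0 w) with w by (unfold ell, A; simpl; ring).
    rewrite (sumk_ext (fun i => Binomial.C n i * ell (S i) w)
       (fun i => w * (1 + w) * (Binomial.C n i * elld i w)))
      by (intros; rewrite ell_rec; ring).
    rewrite sumk_scal.
    rewrite (IHn w). ring.
Qed.

Lemma Li_id n q : q <> 1 ->
  Li_neg n q = q * (1 + sumk (fun i => Binomial.C n i * Li_neg i q) (S n)).
Proof.
  intros Hq.
  rewrite !Li_ell. set (w := q / (1 - q)).
  rewrite (sumk_ext (fun i => Binomial.C n i * Li_neg i q) (fun i => Binomial.C n i * ell i w))
    by (intros; rewrite Li_ell; reflexivity).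
  simpl sumk. rewrite C_n_n.
  assert (Hw : q * (1 + w) = w) by (unfold w; field; lra).
  pose proof (ell_id n w) as E.
  set (S := sumk (fun i => Binomial.C n i * ell i w) n) in *.
  rewrite E. transitivity ((q * (1 + w)) * (1 + S)); [rewrite Hw; ring | ring].
Qed.
Definition P (b : R) (m : nat) (u : R) : R :=
  sumk (fun i => c (S i) b * u ^ (m - S i) / (INR (fact i) * INR (fact (m - S i)))) m.
Definition Q (b : R) (m : nat) (u : R) : R := P b m u * exp (- 2 * PI * b * u).

Lemma isd_mult f g x df dg : is_derive f x df -> is_derive g x dg ->
  is_derive (fun t => f t * g t) x (df * g x + f x * dg).
Proof. intros H1 H2. eapply is_derive_ext; [|apply (is_derive_mult f g x df dg H1 H2)].
  - intros; reflexivity.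
  - intros; apply Rmult_comm. Qed.

Lemma INR_fact_neq0 n : INR (fact n) <> 0.
Proof. apply not_0_INR, fact_neq_0. Qed.

Lemma P_deriv b m u : is_derive (P b (S m)) u (P b m u).
Proof.
  unfold P.
  eapply is_derive_ext; [intros; reflexivity|].
  replace (sumk (fun i => c (S i) b * u ^ (m - S i) / (INR (fact i) * INR (fact (m - S i)))) m)
    with (sumk (fun i => c (S i) b * (INR (S m - S i) * u ^ (pred (S m - S i))) / (INR (fact i) * INR (fact (S m - S i)))) (S m)).
  - apply (is_derive_sumk (fun i y => c (S i) b * y ^ (S m - S i) / (INR (fact i) * INR (fact (S m - S i))))).
    intros i _. auto_derive; [exact I|]. change (S m - S i)%nat with (m - i)%nat. field. split; apply INR_fact_neq0.
  - simpl sumk at 1. rewrite Nat.sub_diag. simpl INR. rewrite Rmult_0_l, Rmult_0_r, Rdiv_0_l, Rplus_0_r.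
    apply sumk_ext. intros i Hi.
    replace (m - i)%nat with (S (m - S i)) by lia.
    change (fact (S (m - S i))) with (S (m - S i) * fact (m - S i))%nat.
    rewrite mult_INR. simpl pred. field.
    split; [apply INR_fact_neq0|]. split; [apply INR_fact_neq0|]. apply not_0_INR. lia.
Qed.

Lemma P0_fun b u : P b 0 u = 0.
Proof. reflexivity. Qed.

Lemma P_exd b m u : ex_derive (P b m) u.
Proof.
  destruct m.
  - exists 0. eapply is_derive_ext; [|apply (isd_const 0 u)]. intros; reflexivity.
  - exists (P b m u). apply P_deriv.
Qed.

Lemma Q_deriv b m u : is_derive (Q b (S m)) u (Q b m u - 2 * PI * b * Q b (S m) u).
Proof.
  unfold Q.
  eapply is_derive_ext; [intros; reflexivity|].
  replace (P b m u * exp (- 2 * PI * b * u) - 2 * PI * b * (P b (S m) u * exp (- 2 * PI * b * u)))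
    with (P b m u * exp (- 2 * PI * b * u) + P b (S m) u * (- 2 * PI * b * exp (- 2 * PI * b * u))) by ring.
  apply (isd_mult (P b (S m)) (fun t => exp (- 2 * PI * b * t))); [apply P_deriv|]. auto_derive; [exact I|]. ring.
Qed.

Lemma exd_cont (f:R->R) x : ex_derive f x -> continuous f x.
Proof. intros H. exact (ex_derive_continuous (K:=R_AbsRing) (V:=R_NormedModule) f x H). Qed.

Lemma Q_cont b m u : continuous (Q b m) u.
Proof.
  apply exd_cont. unfold Q.
  destruct (P_exd b m u) as [d Hd].
  eexists. apply isd_mult; [exact Hd|]. auto_derive; [exact I|]. reflexivity.
Qed.

Lemma P_at0 b n : P b (S n) 0 = c (S n) b / INR (fact n).
Proof.
  unfold P. simpl sumk at 1. rewrite Nat.sub_diag.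
  rewrite sumk_zero.
  - simpl. field. apply INR_fact_neq0.
  - intros i Hi. change (S n - S i)%nat with (n - i)%nat. rewrite pow_i by lia. unfold Rdiv. ring.
Qed.

Lemma exp_neq1 b : b <> 0 -> exp (- 2 * PI * b) <> 1.
Proof.
  intros Hb E. rewrite <- exp_0 in E. apply exp_inv in E.
  pose proof PI_RGT_0. apply Hb. nra.
Qed.

Lemma P_boundary b n : b <> 0 ->
  exp (- 2 * PI * b) * P b (S n) 1 - P b (S n) 0 = - (if Nat.eqb n 0 then 1 else 0).
Proof.
  intros Hb. set (q := exp (- 2 * PI * b)).
  assert (H1 : P b (S n) 1 = (1 + sumk (fun i => Binomial.C n i * Li_neg i q) (S n)) / INR (fact n)).
  { unfold P.
    rewrite (sumk_ext _ (fun i => / INR (fact n) * (Binomial.C n i * (if Nat.eqb (S i) 1 then 1 else 0)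
                                  + Binomial.C n i * Li_neg i q))).
    - rewrite sumk_scal. unfold Rdiv. rewrite Rmult_comm.
      f_equal. rewrite sumk_plus. f_equal.
      rewrite sumk_shift. rewrite C_n_0. simpl Nat.eqb. rewrite sumk_zero; [ring|].
      intros; simpl; ring.
    - intros i Hi. unfold c. rewrite pow1. simpl (S i - 1)%nat. rewrite Nat.sub_0_r.
      unfold Binomial.C. change (S n - S i)%nat with (n - i)%nat. fold q. field.
      split; [apply INR_fact_neq0|]. split; apply INR_fact_neq0. }
  rewrite H1, P_at0. unfold c. simpl (S n - 1)%nat. rewrite Nat.sub_0_r. fold q.
  rewrite (Li_id n q) by (apply exp_neq1; exact Hb).
  destruct n; simpl Nat.eqb; cbv iota; simpl (fact 0); [simpl INR; field|field; apply INR_fact_neq0].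
Qed.
Ltac rring := match goal with |- ?a = ?b => change (@eq R a b) end; ring.
Lemma cR_mult (f g : R -> R) x : continuous f x -> continuous g x -> continuous (fun y => f y * g y) x.
Proof. intros. exact (continuous_mult (U:=R_UniformSpace) (K:=R_AbsRing) f g x H H0). Qed.
Lemma cR_plus (f g : R -> R) x : continuous f x -> continuous g x -> continuous (fun y => f y + g y) x.
Proof. intros. exact (continuous_plus (U:=R_UniformSpace) (V:=R_NormedModule) f g x H H0). Qed.
Lemma cR_minus (f g : R -> R) x : continuous f x -> continuous g x -> continuous (fun y => f y - g y) x.
Proof. intros. exact (continuous_minus (U:=R_UniformSpace) (V:=R_NormedModule) f g x H H0). Qed.
Lemma cR_const (a : R) x : continuous (fun _ : R => a) x.
Proof. exact (continuous_const (U:=R_UniformSpace) (V:=R_UniformSpace) a x). Qed.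
Lemma cR_id x : continuous (fun y : R => y) x.
Proof. exact (continuous_id (U:=R_UniformSpace) x). Qed.
Lemma iR_plus f g a b If Ig : is_RInt f a b If -> is_RInt g a b Ig -> is_RInt (fun x => f x + g x) a b (If + Ig).
Proof. intros. exact (is_RInt_plus (V:=R_NormedModule) f g a b If Ig H H0). Qed.
Lemma iR_minus f g a b If Ig : is_RInt f a b If -> is_RInt g a b Ig -> is_RInt (fun x => f x - g x) a b (If - Ig).
Proof. intros. exact (is_RInt_minus (V:=R_NormedModule) f g a b If Ig H H0). Qed.
Lemma iR_scal k f a b If : is_RInt f a b If -> is_RInt (fun x => k * f x) a b (k * If).
Proof. intros. exact (is_RInt_scal (V:=R_NormedModule) f a b k If H). Qed.
Lemma iR_cont f a b : (forall x, continuous f x) -> is_RInt f a b (RInt (V:=R_CompleteNormedModule) f a b).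
Proof. intros H. exact (RInt_correct f a b (ex_RInt_continuous f a b (fun x _ => H x))). Qed.
Lemma iR_unique f a b l : is_RInt f a b l -> RInt (V:=R_CompleteNormedModule) f a b = l.
Proof. intros. exact (is_RInt_unique f a b l H). Qed.
Lemma iR_deriv f df a b : (forall x, is_derive f x (df x)) -> (forall x, continuous df x) -> is_RInt df a b (f b - f a).
Proof. intros. exact (is_RInt_derive f df a b (fun x _ => H x) (fun x _ => H0 x)). Qed.

Lemma iR_uniq2 (f : R -> R) a b (l1 l2 : R) : is_RInt f a b l1 -> is_RInt f a b l2 -> l1 = l2.
Proof. intros H1 H2. rewrite <- (iR_unique _ _ _ _ H1). apply iR_unique; exact H2. Qed.

Lemma cont_cos_lin w x : continuous (fun u => cos (w * u)) x.
Proof. apply exd_cont. auto_derive. exact I. Qed.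
Lemma cont_sin_lin w x : continuous (fun u => sin (w * u)) x.
Proof. apply exd_cont. auto_derive. exact I. Qed.

Definition Ic b n m : R := RInt (V:=R_CompleteNormedModule) (fun u => Q b m u * cos (2 * PI * INR n * u)) 0 1.
Definition Is b n m : R := RInt (V:=R_CompleteNormedModule) (fun u => Q b m u * sin (2 * PI * INR n * u)) 0 1.
Definition Xc b n m := Ic b n m + (if Nat.eqb m 0 then 1 else 0).

Lemma Ic_is b n m : is_RInt (V:=R_NormedModule) (fun u => Q b m u * cos (2 * PI * INR n * u)) 0 1 (Ic b n m).
Proof. apply iR_cont. intros; apply cR_mult; [apply Q_cont|apply cont_cos_lin]. Qed.
Lemma Is_is b n m : is_RInt (V:=R_NormedModule) (fun u => Q b m u * sin (2 * PI * INR n * u)) 0 1 (Is b n m).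
Proof. apply iR_cont. intros; apply cR_mult; [apply Q_cont|apply cont_sin_lin]. Qed.

Lemma cos_2PIn n : cos (2 * PI * INR n * 1) = 1.
Proof. replace (2 * PI * INR n * 1) with (0 + 2 * INR n * PI) by ring. rewrite cos_period. apply cos_0. Qed.
Lemma sin_2PIn n : sin (2 * PI * INR n * 1) = 0.
Proof. replace (2 * PI * INR n * 1) with (0 + 2 * INR n * PI) by ring. rewrite sin_period. apply sin_0. Qed.

Lemma Q_boundary b p : b <> 0 -> Q b (S p) 1 - Q b (S p) 0 = - (if Nat.eqb p 0 then 1 else 0).
Proof.
  intros Hb. unfold Q. rewrite Rmult_1_r, Rmult_0_r, exp_0, Rmult_1_r.
  rewrite <- (P_boundary b p Hb). ring.
Qed.

Lemma fourier_rec b n p : b <> 0 ->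
  2 * PI * b * Xc b n (S p) + 2 * PI * INR n * Is b n (S p) = Xc b n p /\
  2 * PI * b * Is b n (S p) - 2 * PI * INR n * Xc b n (S p) = Is b n p.
Proof.
  intros Hb. unfold Xc. simpl (Nat.eqb (S p) 0). rewrite Rplus_0_r.
  set (w := 2 * PI * INR n). set (be := 2 * PI * b).
  split.
  - assert (H1 : is_RInt (V:=R_NormedModule) (fun u => (Q b p u - be * Q b (S p) u) * cos (w * u) + Q b (S p) u * (- w * sin (w * u))) 0 1
                  (Q b (S p) 1 * cos (w * 1) - Q b (S p) 0 * cos (w * 0))).
    { apply (iR_deriv (fun u => Q b (S p) u * cos (w * u))).
      - intros x. apply (isd_mult (Q b (S p)) (fun u => cos (w * u))).
        + unfold be. apply Q_deriv.
        + auto_derive; [exact I|]. ring.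
      - intros x. apply cR_plus; apply cR_mult.
        + apply cR_minus; [apply Q_cont|]. apply cR_mult; [apply cR_const|apply Q_cont].
        + apply cont_cos_lin.
        + apply Q_cont.
        + apply cR_mult; [apply cR_const|apply cont_sin_lin]. }
    assert (H2 : is_RInt (V:=R_NormedModule) (fun u => (Q b p u - be * Q b (S p) u) * cos (w * u) + Q b (S p) u * (- w * sin (w * u))) 0 1
                  (Ic b n p - be * Ic b n (S p) - w * Is b n (S p))).
    { eapply is_RInt_ext; [|apply iR_minus; [apply iR_minus; [apply (Ic_is b n p)|apply iR_scal; apply (Ic_is b n (S p))]|apply iR_scal; apply (Is_is b n (S p))]].
      intros x _. cbv beta. unfold w. match goal with |- ?a = ?b => change (@eq R a b) end; ring. }
    pose proof (iR_uniq2 _ _ _ _ _ H1 H2) as E.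
    replace (w * 0) with 0 in E by ring. unfold w in E. rewrite cos_2PIn, cos_0 in E. fold w in E.
    pose proof (Q_boundary b p Hb) as E2.
    destruct (Nat.eqb p 0); lra.
  - assert (H1 : is_RInt (V:=R_NormedModule) (fun u => (Q b p u - be * Q b (S p) u) * sin (w * u) + Q b (S p) u * (w * cos (w * u))) 0 1
                  (Q b (S p) 1 * sin (w * 1) - Q b (S p) 0 * sin (w * 0))).
    { apply (iR_deriv (fun u => Q b (S p) u * sin (w * u))).
      - intros x. apply (isd_mult (Q b (S p)) (fun u => sin (w * u))).
        + unfold be. apply Q_deriv.
        + auto_derive; [exact I|]. ring.
      - intros x. apply cR_plus; apply cR_mult.
        + apply cR_minus; [apply Q_cont|]. apply cR_mult; [apply cR_const|apply Q_cont].
        + apply cont_sin_lin.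
        + apply Q_cont.
        + apply cR_mult; [apply cR_const|apply cont_cos_lin]. }
    assert (H2 : is_RInt (V:=R_NormedModule) (fun u => (Q b p u - be * Q b (S p) u) * sin (w * u) + Q b (S p) u * (w * cos (w * u))) 0 1
                  (Is b n p - be * Is b n (S p) + w * Ic b n (S p))).
    { eapply is_RInt_ext; [|apply iR_plus; [apply iR_minus; [apply (Is_is b n p)|apply iR_scal; apply (Is_is b n (S p))]|apply iR_scal; apply (Ic_is b n (S p))]].
      intros x _. cbv beta. unfold w. match goal with |- ?a = ?b => change (@eq R a b) end; ring. }
    pose proof (iR_uniq2 _ _ _ _ _ H1 H2) as E.
    replace (w * 0) with 0 in E by ring. unfold w in E. rewrite sin_2PIn, sin_0 in E. fold w in E. lra.
Qed.

Lemma Q0 b u : Q b 0 u = 0.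
Proof. unfold Q, P. simpl. ring. Qed.

Lemma RInt_zero_fun (f : R -> R) : (forall u, f u = 0) -> RInt (V:=R_CompleteNormedModule) f 0 1 = 0.
Proof.
  intros H. apply iR_unique.
  assert (H0 : is_RInt (V:=R_NormedModule) (fun _ => 0) 0 1 (0 - 0)).
  { apply (iR_deriv (fun _ => 0) (fun _ => 0)); intros; [apply isd_const|apply cR_const]. }
  rewrite Rminus_0_r in H0.
  eapply is_RInt_ext; [|exact H0]. intros; rewrite H; reflexivity.
Qed.

Lemma Cmul_assoc z1 z2 z3 : Cmul (Cmul z1 z2) z3 = Cmul z2 (Cmul z1 z3).
Proof. destruct z1, z2, z3. unfold Cmul; simpl. f_equal; ring. Qed.

Lemma Cpow_fourier b n m : b <> 0 ->
  Cmul (Cpow (2 * PI * b, 2 * PI * INR n) m) (Xc b n m, - Is b n m) = (1, 0).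
Proof.
  intros Hb. induction m.
  - simpl. unfold Xc, Ic, Is. simpl Nat.eqb.
    rewrite !RInt_zero_fun by (intros; rewrite Q0; ring).
    unfold Cmul; simpl. f_equal; ring.
  - simpl Cpow. rewrite Cmul_assoc.
    destruct (fourier_rec b n m Hb) as [E1 E2].
    replace (Cmul (2 * PI * b, 2 * PI * INR n) (Xc b n (S m), - Is b n (S m))) with (Xc b n m, - Is b n m).
    + exact IHm.
    + unfold Cmul; simpl. f_equal; lra.
Qed.

Lemma Cpow_scale s x1 x2 m :
  Cpow (s * x1, s * x2) m = (s ^ m * fst (Cpow (x1, x2) m), s ^ m * snd (Cpow (x1, x2) m)).
Proof.
  induction m; simpl; [f_equal; ring|]. rewrite IHm. unfold Cmul; simpl. f_equal; ring.
Qed.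

Lemma Im_term b n k : b <> 0 -> Im (term k b n) = - (2 * PI) ^ k * Is b n k.
Proof.
  intros Hb. pose proof (Cpow_fourier b n k Hb) as H.
  rewrite (Cpow_scale (2 * PI) b (INR n) k) in H.
  unfold term, Im, Cinv.
  destruct (Cpow (b, INR n) k) as [y1 y2]. simpl in *.
  unfold Cmul in H; simpl in H. injection H as H1 H2.
  set (s := (2 * PI) ^ k) in *.
  set (X := Xc b n k) in *. set (Y := Is b n k) in *.
  assert (HN : y1 ^ 2 + y2 ^ 2 <> 0).
  { intros HN. assert (E1 : y1 = 0) by (simpl in HN; nra). assert (E2 : y2 = 0) by (simpl in HN; nra).
    rewrite E1, E2 in H1. ring_simplify in H1. lra. }
  assert (HY : (s * Y) * (y1 ^ 2 + y2 ^ 2) = y2).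
  { pose proof (f_equal (fun t => y2 * t) H1) as A1. pose proof (f_equal (fun t => y1 * t) H2) as A2.
    simpl in A1, A2. simpl. lra. }
  field_simplify_eq; [|simpl in HN; rewrite !Rmult_1_r in HN; exact HN]. lra.
Qed.

Lemma RInt_const_R (a b M : R) : RInt (V:=R_CompleteNormedModule) (fun _ => M) a b = M * (b - a).
Proof. rewrite RInt_const. unfold scal; simpl; unfold mult; simpl. ring. Qed.

Lemma isR_bound (h : R -> R) a b l M : a <= b -> is_RInt (V:=R_NormedModule) h a b l ->
  (forall x, a < x < b -> Rabs (h x) <= M) -> Rabs l <= M * (b - a).
Proof.
  intros Hab H HM.
  assert (Ex : ex_RInt h a b) by (exists l; exact H).
  rewrite <- (iR_unique _ _ _ _ H).
  apply Rabs_le. split.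
  - replace (- (M * (b - a))) with ((- M) * (b - a)) by ring. rewrite <- RInt_const_R.
    apply RInt_le; auto. apply ex_RInt_const.
    intros x Hx. specialize (HM x Hx). apply Rabs_le_between in HM. lra.
  - rewrite <- RInt_const_R.
    apply RInt_le; auto. apply ex_RInt_const.
    intros x Hx. specialize (HM x Hx). apply Rabs_le_between in HM. lra.
Qed.

Lemma sin_sum_closed r t N :
  (1 - 2 * r * cos t + r ^ 2) * sumk (fun n => r ^ n * sin (INR n * t)) N =
  r * sin t - r ^ N * sin (INR N * t) + r ^ (S N) * sin ((INR N - 1) * t).
Proof.
  induction N.
  - simpl. rewrite Rmult_0_l, sin_0. replace ((0 - 1) * t) with (- t) by ring. rewrite sin_neg. ring.
  - simpl sumk. rewrite Rmult_plus_distr_l, IHN. rewrite S_INR.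
    replace ((INR N + 1) * t) with (INR N * t + t) by ring.
    replace ((INR N + 1 - 1) * t) with (INR N * t) by ring.
    replace ((INR N - 1) * t) with (INR N * t - t) by ring.
    rewrite sin_plus, sin_minus. simpl. ring.
Qed.

Definition Kr (r u : R) : R := r * sin (2 * PI * u) / (1 - 2 * r * cos (2 * PI * u) + r ^ 2).

Lemma Dpos r t : 0 <= r < 1 -> (1 - r) ^ 2 <= 1 - 2 * r * cos t + r ^ 2.
Proof. intros Hr. pose proof (COS_bound t). nra. Qed.

Lemma Kr_cont r u : 0 <= r < 1 -> continuous (Kr r) u.
Proof.
  intros Hr. apply exd_cont. unfold Kr.
  assert (0 < 1 - 2 * r * cos (2 * PI * u) + r ^ 2).
  { pose proof (Dpos r (2 * PI * u) Hr). nra. }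
  auto_derive. lra.
Qed.

Lemma Kr_minus_sum r u N : 0 <= r < 1 ->
  Rabs (Kr r u - sumk (fun n => r ^ n * sin (2 * PI * INR n * u)) N) <= 2 * r ^ N / (1 - r) ^ 2.
Proof.
  intros Hr. set (t := 2 * PI * u). set (D := 1 - 2 * r * cos t + r ^ 2).
  pose proof (Dpos r t Hr) as HD. fold D in HD.
  assert (HD0 : 0 < (1 - r) ^ 2) by (apply pow_lt; lra).
  pose proof (sin_sum_closed r t N) as E. fold D in E.
  rewrite (sumk_ext _ (fun n => r ^ n * sin (INR n * t))) by (intros; unfold t; f_equal; f_equal; ring).
  assert (Hs : Kr r u - sumk (fun n => r ^ n * sin (INR n * t)) N =
               (r ^ N * sin (INR N * t) - r ^ S N * sin ((INR N - 1) * t)) / D).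
  { assert (ES : sumk (fun n => r ^ n * sin (INR n * t)) N =
       (r * sin t - r ^ N * sin (INR N * t) + r ^ (S N) * sin ((INR N - 1) * t)) / D)
      by (rewrite <- E; field; lra).
    unfold Kr. fold t. fold D. rewrite ES. field. lra. }
  rewrite Hs. unfold Rdiv. rewrite Rabs_mult, Rabs_inv.
  assert (HrN : 0 <= r ^ N) by (apply pow_le; lra).
  assert (HrN1 : r ^ S N <= r ^ N) by (simpl; nra).
  assert (Hnum : Rabs (r ^ N * sin (INR N * t) - r ^ S N * sin ((INR N - 1) * t)) <= 2 * r ^ N).
  { unfold Rminus at 1. eapply Rle_trans; [apply Rabs_triang|].
    rewrite Rabs_Ropp, !Rabs_mult.
    pose proof (Rabs_pos (sin (INR N * t))). pose proof (Rabs_pos (sin ((INR N - 1) * t))).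
    pose proof (SIN_bound (INR N * t)) as S1. pose proof (SIN_bound ((INR N - 1) * t)) as S2.
    assert (Rabs (sin (INR N * t)) <= 1) by (apply Rabs_le; lra).
    assert (Rabs (sin ((INR N - 1) * t)) <= 1) by (apply Rabs_le; lra).
    rewrite (Rabs_right (r ^ N)) by lra. rewrite (Rabs_right (r ^ S N)) by (apply Rle_ge, pow_le; lra).
    assert (0 <= r ^ S N) by (apply pow_le; lra). nra. }
  rewrite (Rabs_right D) by lra.
  apply Rmult_le_compat; auto using Rabs_pos.
  - left; apply Rinv_0_lt_compat; lra.
  - apply Rinv_le_contravar; lra.
Qed.

Lemma isR_zero a b : is_RInt (V:=R_NormedModule) (fun _ => 0) a b 0.
Proof.
  assert (H0 : is_RInt (V:=R_NormedModule) (fun _ => 0) a b (0 - 0)).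
  { apply (iR_deriv (fun _ => 0) (fun _ => 0)); intros; [apply isd_const|apply cR_const]. }
  rewrite Rminus_0_r in H0. exact H0.
Qed.

Lemma sum_int (g : R -> R) (y : nat -> R) r N :
  (forall n, is_RInt (V:=R_NormedModule) (fun u => g u * sin (2 * PI * INR n * u)) 0 1 (y n)) ->
  is_RInt (V:=R_NormedModule) (fun u => g u * sumk (fun n => r ^ n * sin (2 * PI * INR n * u)) N) 0 1
    (sumk (fun n => r ^ n * y n) N).
Proof.
  intros Hy. induction N.
  - eapply is_RInt_ext; [|apply isR_zero]. intros; cbv beta; simpl sumk; rring.
  - simpl sumk. eapply is_RInt_ext; [|apply iR_plus; [exact IHN|apply iR_scal; apply Hy]].
    intros x _. cbv beta. rring.
Qed.

Lemma pow_le1 r n : 0 <= r <= 1 -> 0 <= r ^ n <= 1.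
Proof. intros Hr. induction n; simpl; [lra|]. nra. Qed.

Lemma bernoulli r n : 0 <= r <= 1 -> 1 - r ^ n <= INR n * (1 - r).
Proof.
  intros Hr. induction n; [simpl; lra|].
  pose proof (pow_le1 r n Hr). rewrite S_INR. cbn [pow]. nra.
Qed.

Lemma abel_int (g : R -> R) (y : nat -> R) r N G :
  (forall u, continuous g u) ->
  (forall n, is_RInt (V:=R_NormedModule) (fun u => g u * sin (2 * PI * INR n * u)) 0 1 (y n)) ->
  (forall u, 0 <= u <= 1 -> Rabs (g u) <= G) -> 0 <= r < 1 ->
  Rabs (RInt (V:=R_CompleteNormedModule) (fun u => g u * Kr r u) 0 1 - sumk (fun n => r ^ n * y n) N)
   <= G * (2 * r ^ N / (1 - r) ^ 2) * (1 - 0).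
Proof.
  intros Hg Hy HG Hr.
  assert (H1 : is_RInt (V:=R_NormedModule) (fun u => g u * Kr r u) 0 1
      (RInt (V:=R_CompleteNormedModule) (fun u => g u * Kr r u) 0 1)).
  { apply iR_cont. intros; apply cR_mult; [apply Hg|apply Kr_cont; auto]. }
  pose proof (iR_minus _ _ _ _ _ _ H1 (sum_int g y r N Hy)) as H2.
  apply (isR_bound _ 0 1 _ _ ltac:(lra) H2).
  intros x Hx. cbv beta.
  rewrite <- Rmult_minus_distr_l, Rabs_mult.
  apply Rmult_le_compat; auto using Rabs_pos. apply HG; lra.
  apply Kr_minus_sum; auto.
Qed.

Definition tb (n : nat) : R := 2 / (INR n * (INR n + 1)).

Lemma tail_bound (z : nat -> R) N d :
  (forall n, (1 <= n)%nat -> Rabs (z n) <= tb n) -> (1 <= N)%nat ->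
  Rabs (sumk z (N + d) - sumk z N) <= 2 / INR N - 2 / INR (N + d).
Proof.
  intros Hz HN. induction d.
  - rewrite Nat.add_0_r. rewrite Rminus_diag_eq by reflexivity. rewrite Rabs_R0. lra.
  - replace (N + S d)%nat with (S (N + d)) by lia. simpl sumk.
    replace (sumk z (N + d) + z (N + d)%nat - sumk z N) with ((sumk z (N + d) - sumk z N) + z (N + d)%nat) by ring.
    eapply Rle_trans; [apply Rabs_triang|].
    pose proof (Hz (N + d)%nat ltac:(lia)) as Hb. unfold tb in Hb.
    assert (HP : 0 < INR (N + d)) by (apply lt_0_INR; lia).
    replace (2 / INR (S (N + d))) with (2 / INR (N + d) - 2 / (INR (N + d) * (INR (N + d) + 1))).
    + lra.
    + rewrite S_INR. field. lra.
Qed.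

Lemma tail_bound2 (z : nat -> R) N M :
  (forall n, (1 <= n)%nat -> Rabs (z n) <= tb n) -> (1 <= N)%nat -> (N <= M)%nat ->
  Rabs (sumk z M - sumk z N) <= 2 / INR N.
Proof.
  intros Hz HN HM. replace M with (N + (M - N))%nat by lia.
  eapply Rle_trans; [apply tail_bound; auto|].
  assert (0 < INR (N + (M - N))) by (apply lt_0_INR; lia).
  assert (0 < 2 / INR (N + (M - N))) by (apply Rdiv_lt_0_compat; lra). lra.
Qed.

Lemma small_N eta : 0 < eta -> exists N, (1 <= N)%nat /\ 2 / INR N < eta.
Proof.
  intros He. destruct (archimed_cor1 (eta / 2)) as [N [H1 H2]]; [lra|].
  exists N. split; [lia|]. unfold Rdiv. lra.
Qed.

Lemma series_exists (z : nat -> R) :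
  (forall n, (1 <= n)%nat -> Rabs (z n) <= tb n) ->
  exists T, Un_cv (sumk z) T /\ forall N, (1 <= N)%nat -> Rabs (T - sumk z N) <= 2 / INR N.
Proof.
  intros Hz.
  assert (HC : Cauchy_crit (sumk z)).
  { intros eps He. destruct (small_N (eps / 2)) as [N [HN1 HN2]]; [lra|].
    exists N. intros n m Hn Hm. unfold R_dist.
    pose proof (tail_bound2 z N n Hz HN1 Hn). pose proof (tail_bound2 z N m Hz HN1 Hm).
    replace (sumk z n - sumk z m) with ((sumk z n - sumk z N) - (sumk z m - sumk z N)) by ring.
    eapply Rle_lt_trans; [apply Rabs_triang|]. rewrite Rabs_Ropp. lra. }
  destruct (R_complete _ HC) as [T HT].
  exists T. split; [exact HT|].
  intros N HN.
  apply Rnot_lt_le. intros Hlt.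
  set (e := Rabs (T - sumk z N) - 2 / INR N).
  destruct (HT e) as [M HM]; [unfold e; lra|].
  specialize (HM (Nat.max M N) ltac:(lia)). unfold R_dist in HM.
  pose proof (tail_bound2 z N (Nat.max M N) Hz HN ltac:(lia)).
  assert (Rabs (T - sumk z N) <= Rabs (sumk z (Nat.max M N) - T) + Rabs (sumk z (Nat.max M N) - sumk z N)).
  { replace (T - sumk z N) with (- (sumk z (Nat.max M N) - T) + (sumk z (Nat.max M N) - sumk z N)) by ring.
    eapply Rle_trans; [apply Rabs_triang|]. rewrite Rabs_Ropp. lra. }
  unfold e in HM. lra.
Qed.

Lemma sumk_abs_bound (w : nat -> R) N cst : (forall n, (n < N)%nat -> Rabs (w n) <= cst) ->
  Rabs (sumk w N) <= INR N * cst.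
Proof.
  induction N; intros H; simpl sumk.
  - rewrite Rabs_R0. simpl. lra.
  - rewrite S_INR. eapply Rle_trans; [apply Rabs_triang|].
    assert (Rabs (sumk w N) <= INR N * cst) by (apply IHN; intros; apply H; lia).
    specialize (H N ltac:(lia)). lra.
Qed.

Lemma tb_le1 n : (1 <= n)%nat -> tb n <= 1.
Proof.
  intros Hn. unfold tb. assert (1 <= INR n) by (apply (le_INR 1); lia).
  apply (Rmult_le_reg_r (INR n * (INR n + 1))); [nra|]. field_simplify; nra.
Qed.

Lemma tb_pos n : (1 <= n)%nat -> 0 <= tb n.
Proof. intros Hn. unfold tb. assert (1 <= INR n) by (apply (le_INR 1); lia).
  apply Rlt_le, Rdiv_lt_0_compat; nra. Qed.

Lemma abel_T (g : R -> R) (y : nat -> R) G T r N0 :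
  (forall u, continuous g u) ->
  (forall n, is_RInt (V:=R_NormedModule) (fun u => g u * sin (2 * PI * INR n * u)) 0 1 (y n)) ->
  (forall u, 0 <= u <= 1 -> Rabs (g u) <= G) ->
  (forall n, (1 <= n)%nat -> Rabs (y n) <= tb n) -> y 0%nat = 0 ->
  (forall N, (1 <= N)%nat -> Rabs (T - sumk y N) <= 2 / INR N) ->
  0 <= r < 1 -> (1 <= N0)%nat ->
  Rabs (T - RInt (V:=R_CompleteNormedModule) (fun u => g u * Kr r u) 0 1) <= 4 / INR N0 + INR N0 * (INR N0 * (1 - r)).
Proof.
  intros Hg Hy HG Hyb Hy0 HT Hr HN0.
  set (I := RInt (V:=R_CompleteNormedModule) (fun u => g u * Kr r u) 0 1).
  assert (HG0 : 0 <= G) by (specialize (HG 0 ltac:(lra)); pose proof (Rabs_pos (g 0)); lra).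
  assert (HN0r : 0 < INR N0) by (apply lt_0_INR; lia).
  apply Rnot_lt_le. intros Hlt.
  set (e := Rabs (T - I) - (4 / INR N0 + INR N0 * (INR N0 * (1 - r)))).
  assert (He : 0 < e) by (unfold e; lra).
  assert (Hr2 : 0 < (1 - r) ^ 2) by (apply pow_lt; lra).
  destruct (pow_lt_1_zero r ltac:(rewrite Rabs_right; lra) (e * (1 - r) ^ 2 / (2 * G + 1)))
    as [N1 HN1].
  { apply Rdiv_lt_0_compat; [apply Rmult_lt_0_compat|]; lra. }
  set (N := Nat.max N1 N0).
  specialize (HN1 N ltac:(unfold N; lia)).
  rewrite Rabs_right in HN1 by (apply Rle_ge, pow_le; lra).
  assert (HrN : 0 <= r ^ N) by (apply pow_le; lra).
  assert (E1 : Rabs (T - sumk y N) <= 2 / INR N0).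
  { eapply Rle_trans; [apply HT; unfold N; lia|].
    unfold Rdiv. apply Rmult_le_compat_l; [lra|]. apply Rinv_le_contravar; [lra|]. apply le_INR; unfold N; lia. }
  set (w := fun n => (1 - r ^ n) * y n).
  assert (Hw : forall n, (1 <= n)%nat -> Rabs (w n) <= tb n).
  { intros n Hn. unfold w. rewrite Rabs_mult. pose proof (pow_le1 r n ltac:(lra)).
    rewrite Rabs_right by lra. pose proof (Hyb n Hn). pose proof (Rabs_pos (y n)). nra. }
  assert (E2 : Rabs (sumk y N - sumk (fun n => r ^ n * y n) N) <= INR N0 * (INR N0 * (1 - r)) + 2 / INR N0).
  { replace (sumk y N - sumk (fun n => r ^ n * y n) N) with (sumk w N0 + (sumk w N - sumk w N0)).
    - eapply Rle_trans; [apply Rabs_triang|]. apply Rplus_le_compat.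
      + apply sumk_abs_bound. intros n Hn. unfold w. rewrite Rabs_mult.
        pose proof (pow_le1 r n ltac:(lra)). rewrite Rabs_right by lra.
        assert (Rabs (y n) <= 1).
        { destruct n; [rewrite Hy0, Rabs_R0; lra|]. eapply Rle_trans; [apply Hyb; lia|apply tb_le1; lia]. }
        pose proof (bernoulli r n ltac:(lra)). assert (INR n <= INR N0) by (apply le_INR; lia).
        pose proof (Rabs_pos (y n)).
        apply Rle_trans with (1 - r ^ n); [nra|]. nra.
      + apply tail_bound2; auto. unfold N; lia.
    - assert (sumk w N = sumk y N - sumk (fun n => r ^ n * y n) N).
      { unfold w. rewrite <- sumk_minus. apply sumk_ext; intros; ring. }
      lra. }
  assert (E3 : Rabs (I - sumk (fun n => r ^ n * y n) N) <= G * (2 * r ^ N / (1 - r) ^ 2) * (1 - 0))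
    by (apply abel_int; auto).
  assert (E3' : G * (2 * r ^ N / (1 - r) ^ 2) * (1 - 0) < e).
  { rewrite Rminus_0_r, Rmult_1_r.
    apply Rle_lt_trans with ((2 * G + 1) * r ^ N / (1 - r) ^ 2).
    - apply Rle_trans with ((2 * G * r ^ N) / (1 - r) ^ 2); [right; field; lra|].
      unfold Rdiv. apply Rmult_le_compat_r; [left; apply Rinv_0_lt_compat; lra|]. nra.
    - apply (Rmult_lt_reg_r ((1 - r) ^ 2 / (2 * G + 1))); [apply Rdiv_lt_0_compat; lra|].
      replace ((2 * G + 1) * r ^ N / (1 - r) ^ 2 * ((1 - r) ^ 2 / (2 * G + 1))) with (r ^ N) by (field; lra).
      replace (e * ((1 - r) ^ 2 / (2 * G + 1))) with (e * (1 - r) ^ 2 / (2 * G + 1)) by (field; lra).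
      exact HN1. }
  assert (Rabs (T - I) <= Rabs (T - sumk y N) + Rabs (sumk y N - sumk (fun n => r ^ n * y n) N)
                           + Rabs (I - sumk (fun n => r ^ n * y n) N)).
  { replace (T - I) with ((T - sumk y N) + (sumk y N - sumk (fun n => r ^ n * y n) N)
                           - (I - sumk (fun n => r ^ n * y n) N)) by ring.
    unfold Rminus at 1. eapply Rle_trans; [apply Rabs_triang|]. rewrite Rabs_Ropp.
    apply Rplus_le_compat_r. apply Rabs_triang. }
  unfold e in E3'. lra.
Qed.
Lemma sin_ge_third x : 0 <= x <= 2 -> x / 3 <= sin x.
Proof.
  intros Hx. assert (HP : 2 < PI) by (pose proof PI2_1; lra).
  destruct (SIN x ltac:(lra) ltac:(lra)) as [H _].
  eapply Rle_trans; [|exact H].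
  unfold sin_lb, sin_approx. cbn [sum_f_R0]. unfold sin_term.
  change (fact (2*0+1)) with 1%nat. change (fact (2*1+1)) with 6%nat.
  change (fact (2*2+1)) with 120%nat. change (fact (2*3+1)) with 5040%nat.
  replace (INR 5040) with 5040 by (rewrite INR_IZR_INZ; f_equal).
  replace (INR 120) with 120 by (rewrite INR_IZR_INZ; f_equal).
  replace (INR 6) with 6 by (rewrite INR_IZR_INZ; f_equal).
  replace (INR 1) with 1 by reflexivity.
  cbn [pow Nat.mul Nat.add]. 
  assert (Ht : 0 <= x * x <= 4) by nra.
  assert (H1 : 0 <= (x * x) * (x * x) * (1 / 120 - x * x / 5040)) by (apply Rmult_le_pos; nra).
  assert (H2 : 0 <= 2 / 3 - x * x / 6) by nra.
  assert (H3 : 0 <= x * ((x * x) * (x * x) * (1 / 120 - x * x / 5040) + (2 / 3 - x * x / 6))) by (apply Rmult_le_pos; lra).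
  lra.
Qed.

Lemma sin_lower u : 0 <= u <= 1 -> 2 / 3 * Rmin u (1 - u) <= sin (PI * u).
Proof.
  intros Hu. pose proof PI_4 as HP4. assert (HP : 2 < PI) by (pose proof PI2_1; lra).
  destruct (Rle_dec u (1/2)) as [Hh|Hh].
  - rewrite Rmin_left by lra. pose proof (sin_ge_third (PI * u) ltac:(nra)). nra.
  - rewrite Rmin_right by lra. rewrite <- sin_PI_x.
    replace (PI - PI * u) with (PI * (1 - u)) by ring.
    pose proof (sin_ge_third (PI * (1 - u)) ltac:(nra)). nra.
Qed.

Lemma iR_chasles (f : R -> R) a b c l1 l2 : is_RInt (V:=R_NormedModule) f a b l1 ->
  is_RInt (V:=R_NormedModule) f b c l2 -> is_RInt (V:=R_NormedModule) f a c (l1 + l2).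
Proof. intros. exact (is_RInt_Chasles f a b c l1 l2 H H0). Qed.

Lemma iR_cont_on (f : R -> R) a b : a <= b -> (forall x, a <= x <= b -> continuous f x) ->
  is_RInt (V:=R_NormedModule) f a b (RInt (V:=R_CompleteNormedModule) f a b).
Proof.
  intros Hab H. apply (RInt_correct (V:=R_CompleteNormedModule)).
  apply (ex_RInt_continuous (V:=R_CompleteNormedModule)). intros z Hz.
  apply H. rewrite Rmin_left, Rmax_right in Hz by lra. exact Hz.
Qed.

Definition Fc (g : R -> R) (u : R) : R := g u * cot (PI * u).

Lemma Fc_cont g u : (forall u, continuous g u) -> 0 < u < 1 -> continuous (Fc g) u.
Proof.
  intros Hg Hu. unfold Fc, cot. apply cR_mult; [apply Hg|].
  assert (Hs : 0 < sin (PI * u)) by (apply sin_gt_0; pose proof PI_RGT_0; nra).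
  apply exd_cont. auto_derive. lra.
Qed.

Lemma Kr_identity g r u : 0 <= r < 1 -> 0 < u < 1 ->
  2 * (g u * Kr r u) = Fc g u * (4 * r * sin (PI * u) ^ 2 / ((1 - r) ^ 2 + 4 * r * sin (PI * u) ^ 2)) /\
  Fc g u - 2 * (g u * Kr r u) = Fc g u * ((1 - r) ^ 2 / ((1 - r) ^ 2 + 4 * r * sin (PI * u) ^ 2)).
Proof.
  intros Hr Hu.
  assert (Hs : 0 < sin (PI * u)) by (apply sin_gt_0; pose proof PI_RGT_0; nra).
  assert (HD : 0 < (1 - r) ^ 2 + 4 * r * sin (PI * u) ^ 2).
  { assert (0 < (1 - r) ^ 2) by (apply pow_lt; lra). assert (0 <= 4 * r * sin (PI * u) ^ 2) by (apply Rmult_le_pos; [lra|apply pow2_ge_0]). lra. }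
  assert (E1 : sin (2 * PI * u) = 2 * sin (PI * u) * cos (PI * u)).
  { replace (2 * PI * u) with (2 * (PI * u)) by ring. apply sin_2a. }
  assert (E2 : 1 - 2 * r * cos (2 * PI * u) + r ^ 2 = (1 - r) ^ 2 + 4 * r * sin (PI * u) ^ 2).
  { replace (2 * PI * u) with (2 * (PI * u)) by ring. rewrite cos_2a_sin. ring. }
  unfold Kr, Fc, cot. rewrite E1, E2. split; field; lra.
Qed.

Lemma Rmin_pos x y : 0 < x -> 0 < y -> 0 < Rmin x y.
Proof. intros. unfold Rmin. destruct (Rle_dec x y); lra. Qed.

Lemma improper_main (g : R -> R) (y : nat -> R) G B T :
  (forall u, continuous g u) ->
  (forall n, is_RInt (V:=R_NormedModule) (fun u => g u * sin (2 * PI * INR n * u)) 0 1 (y n)) ->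
  (forall u, 0 <= u <= 1 -> Rabs (g u) <= G) ->
  (forall n, (1 <= n)%nat -> Rabs (y n) <= tb n) -> y 0%nat = 0 ->
  (forall N, (1 <= N)%nat -> Rabs (T - sumk y N) <= 2 / INR N) ->
  (forall u, 0 < u < 1 -> Rabs (Fc g u) <= B) ->
  improper_integral_01 (Fc g) (2 * T).
Proof.
  intros Hg Hy HG Hyb Hy0 HT HB.
  split.
  { intros a b Ha Hab Hb. constructor. apply ex_RInt_Reals_0.
    apply (ex_RInt_continuous (V:=R_CompleteNormedModule)). intros z Hz.
    rewrite Rmin_left, Rmax_right in Hz by lra. apply Fc_cont; auto; lra. }
  intros eps Heps.
  assert (HB0 : 0 <= B) by (specialize (HB (1/2) ltac:(lra)); pose proof (Rabs_pos (Fc g (1/2))); lra).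
  set (B' := B + 1).
  set (d1 := Rmin (1/4) (eps / (12 * B'))).
  assert (Hd1 : 0 < d1) by (apply Rmin_pos; [lra|apply Rdiv_lt_0_compat; unfold B'; lra]).
  assert (Hd1a : d1 <= 1/4) by apply Rmin_l.
  assert (Hd1b : d1 <= eps / (12 * B')) by apply Rmin_r.
  assert (Hd1c : 4 * B * d1 <= eps / 3).
  { apply Rle_trans with (4 * B' * (eps / (12 * B'))); [unfold B' in *; nra|]. right. unfold B'. field. lra. }
  set (sg := 2 / 3 * d1).
  assert (Hsg : 0 < sg) by (unfold sg; lra).
  destruct (small_N (eps / 24)) as [N0 [HN0 HN0e]]; [lra|].
  assert (HN0r : 1 <= INR N0) by (apply (le_INR 1); lia).
  set (rho := Rmin (1/2) (Rmin (eps / (12 * (INR N0 * INR N0 + 1))) (eps * sg ^ 2 / (3 * B')))).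
  assert (Hrho : 0 < rho).
  { apply Rmin_pos; [lra|]. apply Rmin_pos; apply Rdiv_lt_0_compat; try (unfold B'; lra).
    - nra. - apply Rmult_lt_0_compat; [lra|apply pow_lt; lra]. }
  assert (Hrho1 : rho <= 1/2) by apply Rmin_l.
  assert (Hrho2 : rho <= eps / (12 * (INR N0 * INR N0 + 1))) by (eapply Rle_trans; [apply Rmin_r|apply Rmin_l]).
  assert (Hrho3 : rho <= eps * sg ^ 2 / (3 * B')) by (eapply Rle_trans; [apply Rmin_r|apply Rmin_r]).
  assert (Hrho2' : INR N0 * (INR N0 * rho) <= eps / 12).
  { apply Rle_trans with (INR N0 * INR N0 * (eps / (12 * (INR N0 * INR N0 + 1)))); [nra|].
    apply (Rmult_le_reg_r (12 * (INR N0 * INR N0 + 1))); [nra|].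
    replace (INR N0 * INR N0 * (eps / (12 * (INR N0 * INR N0 + 1))) * (12 * (INR N0 * INR N0 + 1)))
      with (INR N0 * INR N0 * eps) by (field; nra).
    replace (eps / 12 * (12 * (INR N0 * INR N0 + 1))) with (eps * (INR N0 * INR N0 + 1)) by field.
    nra. }
  assert (Hrho3' : 3 * B' * rho <= eps * sg ^ 2).
  { apply Rle_trans with (3 * B' * (eps * sg ^ 2 / (3 * B'))); [unfold B' in *; nra|].
    right. field. unfold B'; lra. }
  set (r := 1 - rho).
  assert (Hr : 0 <= r < 1) by (unfold r; lra).
  assert (Hr2 : 1/2 <= r) by (unfold r; lra).
  pose proof (abel_T g y G T r N0 Hg Hy HG Hyb Hy0 HT Hr HN0) as HA.
  replace (1 - r) with rho in HA by (unfold r; ring).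
  set (J := RInt (V:=R_CompleteNormedModule) (fun u => g u * Kr r u) 0 1) in HA.
  set (K := fun u => 2 * (g u * Kr r u)).
  set (H := fun u => Fc g u - K u).
  assert (HKc : forall u, continuous K u).
  { intros u. unfold K. apply cR_mult; [apply cR_const|]. apply cR_mult; [apply Hg|apply Kr_cont; auto]. }
  assert (HHc : forall u, 0 < u < 1 -> continuous H u).
  { intros u Hu. unfold H. apply cR_minus; [apply Fc_cont; auto|apply HKc]. }
  assert (HKb : forall u, 0 < u < 1 -> Rabs (K u) <= B /\ Rabs (H u) <= B).
  { intros u Hu. destruct (Kr_identity g r u Hr Hu) as [E1 E2].
    set (s := sin (PI * u)) in *.
    assert (HD : 0 < (1 - r) ^ 2 + 4 * r * s ^ 2).
    { assert (0 < (1 - r) ^ 2) by (apply pow_lt; lra). assert (0 <= 4 * r * s ^ 2) by (apply Rmult_le_pos; [lra|apply pow2_ge_0]). lra. }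
    assert (0 <= 4 * r * s ^ 2) by (apply Rmult_le_pos; [lra|apply pow2_ge_0]).
    assert (0 < (1 - r) ^ 2) by (apply pow_lt; lra).
    pose proof (HB u Hu).
    unfold H, K. cbv beta. rewrite E2, E1, !Rabs_mult. split.
    - rewrite (Rabs_right (_ / _)) by (apply Rle_ge, Rmult_le_pos; [lra|left; apply Rinv_0_lt_compat; lra]).
      apply Rle_trans with (Rabs (Fc g u) * 1); [|lra].
      apply Rmult_le_compat_l; [apply Rabs_pos|]. apply (Rmult_le_reg_r ((1 - r) ^ 2 + 4 * r * s ^ 2)); [lra|].
      unfold Rdiv. rewrite Rmult_assoc, Rinv_l by lra. lra.
    - rewrite (Rabs_right (_ / _)) by (apply Rle_ge, Rmult_le_pos; [lra|left; apply Rinv_0_lt_compat; lra]).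
      apply Rle_trans with (Rabs (Fc g u) * 1); [|lra].
      apply Rmult_le_compat_l; [apply Rabs_pos|]. apply (Rmult_le_reg_r ((1 - r) ^ 2 + 4 * r * s ^ 2)); [lra|].
      unfold Rdiv. rewrite Rmult_assoc, Rinv_l by lra. lra. }
  assert (HHm : forall u, d1 <= u <= 1 - d1 -> Rabs (H u) <= eps / 6).
  { intros u Hu. assert (Hu' : 0 < u < 1) by lra.
    destruct (Kr_identity g r u Hr Hu') as [_ E2].
    pose proof (sin_lower u ltac:(lra)) as Hsl.
    assert (Hmin : d1 <= Rmin u (1 - u)) by (apply Rmin_glb; lra).
    set (s := sin (PI * u)) in *.
    assert (Hs : sg <= s) by (unfold sg; lra).
    assert (Hs2 : sg ^ 2 <= s ^ 2) by (apply pow_incr; lra).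
    assert (HD : 2 * sg ^ 2 <= (1 - r) ^ 2 + 4 * r * s ^ 2).
    { assert (0 <= (1 - r) ^ 2) by apply pow2_ge_0. assert (0 <= sg ^ 2) by apply pow2_ge_0. nra. }
    assert (Hsg2 : 0 < sg ^ 2) by (apply pow_lt; lra).
    pose proof (HB u Hu').
    unfold H, K. cbv beta. rewrite E2, Rabs_mult.
    replace (1 - r) with rho by (unfold r; ring).
    replace (1 - r) with rho in HD by (unfold r; ring).
    rewrite (Rabs_right (_ / _)) by (apply Rle_ge, Rmult_le_pos; [apply pow2_ge_0|left; apply Rinv_0_lt_compat; lra]).
    apply Rle_trans with (B * (rho ^ 2 / (2 * sg ^ 2))).
    - apply Rmult_le_compat; auto using Rabs_pos.
      + apply Rmult_le_pos; [apply pow2_ge_0|left; apply Rinv_0_lt_compat; lra].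
      + unfold Rdiv. apply Rmult_le_compat_l; [apply pow2_ge_0|]. apply Rinv_le_contravar; lra.
    - apply (Rmult_le_reg_r (2 * sg ^ 2)); [lra|].
      unfold Rdiv. replace (B * (rho ^ 2 * / (2 * sg ^ 2)) * (2 * sg ^ 2)) with (B * rho ^ 2) by (field; lra).
      assert (rho ^ 2 <= rho / 2) by (simpl; nra).
      unfold B' in Hrho3'. nra. }
  exists d1. split; [lra|].
  intros a b pr Ha Hb.
  rewrite <- RInt_Reals.
  assert (Hab : a <= d1 /\ d1 <= 1 - d1 /\ 1 - d1 <= b) by lra.
  pose proof (iR_cont_on H a d1 ltac:(lra) (fun x Hx => HHc x ltac:(lra))) as IH1.
  pose proof (iR_cont_on H d1 (1 - d1) ltac:(lra) (fun x Hx => HHc x ltac:(lra))) as IH2.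
  pose proof (iR_cont_on H (1 - d1) b ltac:(lra) (fun x Hx => HHc x ltac:(lra))) as IH3.
  set (h1 := RInt (V:=R_CompleteNormedModule) H a d1) in *.
  set (h2 := RInt (V:=R_CompleteNormedModule) H d1 (1 - d1)) in *.
  set (h3 := RInt (V:=R_CompleteNormedModule) H (1 - d1) b) in *.
  assert (Bh1 : Rabs h1 <= B * (d1 - a)) by (apply (isR_bound H a d1 h1 B); auto; [lra|intros; apply HKb; lra]).
  assert (Bh2 : Rabs h2 <= eps / 6 * (1 - d1 - d1)) by (apply (isR_bound H d1 (1 - d1) h2); auto; [lra|intros; apply HHm; lra]).
  assert (Bh3 : Rabs h3 <= B * (b - (1 - d1))) by (apply (isR_bound H (1 - d1) b h3 B); auto; [lra|intros; apply HKb; lra]).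
  pose proof (iR_cont_on K 0 a ltac:(lra) (fun x _ => HKc x)) as IK1.
  pose proof (iR_cont_on K a b ltac:(lra) (fun x _ => HKc x)) as IK2.
  pose proof (iR_cont_on K b 1 ltac:(lra) (fun x _ => HKc x)) as IK3.
  set (k1 := RInt (V:=R_CompleteNormedModule) K 0 a) in *.
  set (k2 := RInt (V:=R_CompleteNormedModule) K a b) in *.
  set (k3 := RInt (V:=R_CompleteNormedModule) K b 1) in *.
  assert (Bk1 : Rabs k1 <= B * (a - 0)) by (apply (isR_bound K 0 a k1 B); auto; [lra|intros; apply HKb; lra]).
  assert (Bk3 : Rabs k3 <= B * (1 - b)) by (apply (isR_bound K b 1 k3 B); auto; [lra|intros; apply HKb; lra]).
  assert (EK : k1 + k2 + k3 = 2 * J).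
  { apply (iR_uniq2 K 0 1).
    - apply (iR_chasles K 0 b 1); [apply (iR_chasles K 0 a b)|]; auto.
    - unfold K. apply iR_scal. unfold J. apply iR_cont. intros; apply cR_mult; [apply Hg|apply Kr_cont; auto]. }
  pose proof (iR_cont_on (Fc g) a b ltac:(lra) (fun x Hx => Fc_cont g x Hg ltac:(lra))) as IF.
  set (fI := RInt (V:=R_CompleteNormedModule) (Fc g) a b) in *.
  assert (EH : fI - k2 = h1 + h2 + h3).
  { apply (iR_uniq2 H a b).
    - unfold H. apply iR_minus; auto.
    - apply (iR_chasles H a (1 - d1) b); [apply (iR_chasles H a d1 (1 - d1))|]; auto. }
  assert (Hfin : fI - 2 * T = (h1 + h2 + h3) - k1 - k3 + 2 * (J - T)) by lra.
  change (Rabs (fI - 2 * T) < eps).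
  rewrite Hfin.
  assert (HJT : Rabs (J - T) <= 4 / INR N0 + INR N0 * (INR N0 * rho)) by (rewrite Rabs_minus_sym; exact HA).
  assert (H4N : 4 / INR N0 < eps / 12) by (unfold Rdiv in *; lra).
  assert (Rabs (h1 + h2 + h3 - k1 - k3 + 2 * (J - T)) <=
          Rabs h1 + Rabs h2 + Rabs h3 + Rabs k1 + Rabs k3 + 2 * Rabs (J - T)).
  { assert (S1 : forall x z, Rabs (x - z) <= Rabs x + Rabs z).
    { intros x z. unfold Rminus. eapply Rle_trans; [apply Rabs_triang|]. rewrite Rabs_Ropp. lra. }
    pose proof (Rabs_triang h1 h2). pose proof (Rabs_triang (h1 + h2) h3).
    pose proof (S1 (h1 + h2 + h3) k1). pose proof (S1 (h1 + h2 + h3 - k1) k3).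
    pose proof (Rabs_triang (h1 + h2 + h3 - k1 - k3) (2 * (J - T))).
    rewrite Rabs_mult, (Rabs_right 2) in * by lra. lra. }
  assert (E5 : B * (d1 - a) + B * (b - (1 - d1)) + B * (a - 0) + B * (1 - b) = 2 * B * d1) by ring.
  assert (E6 : eps / 6 * (1 - d1 - d1) <= eps / 6) by nra.
  lra.
Qed.

Lemma cont_pt (f : R -> R) x : continuous f x -> continuity_pt f x.
Proof. intros H. apply continuity_pt_filterlim. exact H. Qed.

Lemma bound01 (h : R -> R) : (forall u, continuous h u) -> exists M, forall u, 0 <= u <= 1 -> Rabs (h u) <= M.
Proof.
  intros H. destruct (continuity_ab_maj (fun u => Rabs (h u)) 0 1) as [x [Hx _]].
  - lra.
  - intros c _. apply cont_pt. apply continuous_Rabs_comp. apply H.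
  - exists (Rabs (h x)). exact Hx.
Qed.

Definition normsq (z : R * R) : R := fst z ^ 2 + snd z ^ 2.

Lemma normsq_mul z w : normsq (Cmul z w) = normsq z * normsq w.
Proof. destruct z, w. unfold normsq, Cmul; simpl. ring. Qed.

Lemma normsq_pow z k : normsq (Cpow z k) = normsq z ^ k.
Proof. induction k; simpl Cpow. - unfold normsq; simpl; ring. - rewrite normsq_mul, IHk. simpl. ring. Qed.

Lemma Is_bound b n k : b <> 0 -> (2 <= k)%nat -> (1 <= n)%nat -> Rabs (Is b n k) <= tb n.
Proof.
  intros Hb Hk Hn.
  pose proof (Cpow_fourier b n k Hb) as H.
  apply (f_equal normsq) in H. rewrite normsq_mul, normsq_pow in H.
  unfold normsq at 3 in H. simpl in H.
  set (Z := normsq (2 * PI * b, 2 * PI * INR n)) in H.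
  set (W := normsq (Xc b n k, - Is b n k)) in H.
  assert (Hn1 : 1 <= INR n) by (apply (le_INR 1); lia).
  assert (HPI : 1 < PI) by (pose proof PI2_1; lra).
  assert (HZ : INR n * INR n <= Z).
  { unfold Z, normsq; simpl.
    assert (0 <= (2 * PI * b) * (2 * PI * b)) by nra.
    assert (INR n <= 2 * PI * INR n) by nra.
    assert (INR n * INR n <= (2 * PI * INR n) * (2 * PI * INR n)) by nra.
    nra. }
  assert (HZ1 : 1 <= Z) by nra.
  assert (HZk : Z ^ 2 <= Z ^ k) by (apply Rle_pow; auto).
  assert (HW : Is b n k ^ 2 <= W) by (unfold W, normsq; simpl; nra).
  assert (HW0 : 0 <= W) by (unfold W, normsq; simpl; nra).
  assert (Hn4 : (INR n * INR n) * (INR n * INR n) <= Z ^ k).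
  { simpl in HZk. nra. }
  assert (Hprod : (Rabs (Is b n k) * (INR n * INR n)) ^ 2 <= 1).
  { rewrite Rpow_mult_distr, pow2_abs.
    apply Rle_trans with (W * (Z ^ k)); [|lra].
    apply Rmult_le_compat; try nra. }
  assert (Hp : Rabs (Is b n k) * (INR n * INR n) <= 1).
  { pose proof (Rabs_pos (Is b n k)). simpl in Hprod. nra. }
  unfold tb. apply (Rmult_le_reg_r (INR n * INR n)); [nra|].
  apply Rle_trans with 1; [exact Hp|].
  apply (Rmult_le_reg_r (INR n + 1)); [lra|].
  unfold Rdiv. replace (2 * / (INR n * (INR n + 1)) * (INR n * INR n) * (INR n + 1)) with (2 * INR n) by (field; lra).
  lra.
Qed.

Lemma sin_int0 n : is_RInt (V:=R_NormedModule) (fun u => sin (2 * PI * INR n * u)) 0 1 0.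
Proof.
  destruct n.
  - eapply is_RInt_ext; [|apply isR_zero]. intros x _. simpl. rewrite Rmult_0_r, Rmult_0_l, sin_0. reflexivity.
  - set (w := 2 * PI * INR (S n)).
    assert (Hw : 0 < w) by (unfold w; pose proof PI_RGT_0; pose proof (lt_0_INR (S n) ltac:(lia)); nra).
    assert (H := iR_deriv (fun u => - cos (w * u) / w) (fun u => sin (w * u)) 0 1).
    cbv beta in H. replace (- cos (w * 1) / w - - cos (w * 0) / w) with 0 in H.
    + apply H.
      * intros x. auto_derive; [exact I|]. field. lra.
      * intros x. apply cont_sin_lin.
    + unfold w at 1. rewrite cos_2PIn. rewrite Rmult_0_r, cos_0. field. lra.
Qed.

Definition gfun (k : nat) (b : R) (u : R) : R :=
  sum_f_R0 (fun i =>
     let j := S i in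
     c j b * (u ^ (k - j) * exp (- 2 * PI * b * u) - exp (- 2 * PI * b))
       / (INR (fact (j - 1)) * INR (fact (k - j)))) (k - 1).

Lemma g_eq k b u : (1 <= k)%nat -> gfun k b u = Q b k u - Q b k 1.
Proof.
  intros Hk. destruct k as [|p]; [lia|].
  unfold gfun. replace (S p - 1)%nat with p by lia. rewrite sum_f_R0_sumk.
  unfold Q, P. rewrite Rmult_1_r.
  rewrite !(Rmult_comm (sumk _ _)). rewrite <- !sumk_scal, <- sumk_minus.
  apply sumk_ext. intros i Hi. cbv zeta. simpl (S i - 1)%nat. rewrite Nat.sub_0_r, pow1.
  field. split; apply INR_fact_neq0.
Qed.


Lemma main_proof (k : nat) (b : R) (hk : (2 <= k)%nat) (hb : b <> 0) :
  exists I : R,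
    improper_integral_01 (integrand k b) I /\
    infinite_sum (fun j => Im (term k b j)) (- (2 * PI) ^ k / 2 * I).
Proof.
  set (g := gfun k b).
  assert (Hge : forall u, g u = Q b k u - Q b k 1) by (intros; apply g_eq; lia).
  assert (Hg : forall u, continuous g u).
  { intros u. apply (continuous_ext (fun x => Q b k x - Q b k 1)); [intros; symmetry; apply Hge|].
    apply cR_minus; [apply Q_cont|apply cR_const]. }
  set (y := fun n => Is b n k).
  assert (Hy : forall n, is_RInt (V:=R_NormedModule) (fun u => g u * sin (2 * PI * INR n * u)) 0 1 (y n)).
  { intros n. pose proof (iR_minus _ _ _ _ _ _ (Is_is b n k) (iR_scal (Q b k 1) _ _ _ _ (sin_int0 n))) as H.
    rewrite Rmult_0_r, Rminus_0_r in H.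
    eapply is_RInt_ext; [|exact H]. intros x _. cbv beta. rewrite Hge. rring. }
  destruct (bound01 g Hg) as [G HG].
  assert (Hyb : forall n, (1 <= n)%nat -> Rabs (y n) <= tb n).
  { intros n Hn. unfold y. apply Is_bound; [exact hb|exact hk|exact Hn]. }
  assert (Hy0 : y 0%nat = 0).
  { apply (iR_uniq2 (fun u => g u * sin (2 * PI * INR 0 * u)) 0 1); [apply Hy|].
    eapply is_RInt_ext; [|apply isR_zero]. intros x _. cbv beta.
    replace (2 * PI * INR 0 * x) with 0 by (simpl; ring). rewrite sin_0. rring. }
  destruct (series_exists y Hyb) as [T [HT HTt]].
  set (p := (k - 1)%nat).
  assert (Hkp : k = S p) by (unfold p; clear -hk; lia).
  assert (Hp1 : (1 <= p)%nat) by (unfold p; clear -hk; lia).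
  set (dg := fun x => Q b p x - 2 * PI * b * Q b k x).
  assert (Hdg : forall x, is_derive g x (dg x)).
  { intros x. eapply is_derive_ext; [intros; symmetry; apply Hge|].
    replace (dg x) with ((Q b p x - 2 * PI * b * Q b (S p) x) - 0) by (unfold dg; rewrite <- Hkp; ring).
    replace (Q b k) with (Q b (S p)) by (rewrite <- Hkp; reflexivity).
    apply (is_derive_minus (Q b (S p)) (fun _ => Q b (S p) 1)); [apply Q_deriv|apply isd_const]. }
  assert (Hdgc : forall x, continuous dg x).
  { intros x. unfold dg. apply cR_minus; [apply Q_cont|]. apply cR_mult; [apply cR_const|apply Q_cont]. }
  destruct (bound01 dg Hdgc) as [M1 HM1].
  assert (Hg0 : g 0 = 0).
  { rewrite Hge. pose proof (Q_boundary b p hb) as E. rewrite <- Hkp in E.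
    destruct (Nat.eqb p 0) eqn:Ep; [apply Nat.eqb_eq in Ep; exfalso; clear -Ep Hp1; lia|]. lra. }
  assert (Hg1 : g 1 = 0) by (rewrite Hge; ring).
  assert (Hgb : forall u, 0 < u < 1 -> Rabs (g u) <= M1 * Rmin u (1 - u)).
  { intros u Hu.
    destruct (MVT_gen g 0 u dg) as [c1 [Hc1 E1]].
    { intros x _. apply Hdg. }
    { intros x _. apply cont_pt. apply Hg. }
    destruct (MVT_gen g u 1 dg) as [c2 [Hc2 E2]].
    { intros x _. apply Hdg. }
    { intros x _. apply cont_pt. apply Hg. }
    rewrite Rmin_left in Hc1 by lra. rewrite Rmax_right in Hc1 by lra.
    rewrite Rmin_left in Hc2 by lra. rewrite Rmax_right in Hc2 by lra.
    pose proof (HM1 c1 ltac:(lra)) as B1. pose proof (HM1 c2 ltac:(lra)) as B2.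
    rewrite Hg0 in E1. rewrite Hg1 in E2.
    apply Rmin_case.
    - rewrite !Rminus_0_r in E1. replace (g u) with (dg c1 * u) by lra. rewrite Rabs_mult, (Rabs_right u) by lra.
      apply Rmult_le_compat_r; lra.
    - replace (g u) with (- (dg c2 * (1 - u))) by lra. rewrite Rabs_Ropp, Rabs_mult, (Rabs_right (1 - u)) by lra.
      apply Rmult_le_compat_r; lra. }
  assert (HB : forall u, 0 < u < 1 -> Rabs (Fc g u) <= 3 / 2 * M1).
  { intros u Hu. pose proof (Hgb u Hu) as Hb1.
    pose proof (sin_lower u ltac:(lra)) as Hs.
    assert (Hm : 0 < Rmin u (1 - u)) by (apply Rmin_pos; lra).
    assert (Hs0 : 0 < sin (PI * u)) by lra.
    unfold Fc, cot. rewrite Rabs_mult. unfold Rdiv. rewrite Rabs_mult, Rabs_inv, (Rabs_right (sin (PI * u))) by lra.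
    assert (Hc : Rabs (cos (PI * u)) <= 1) by (apply Rabs_le; apply COS_bound).
    assert (HM10 : 0 <= M1) by (pose proof (Rabs_pos (g u)); nra).
    apply Rle_trans with (M1 * Rmin u (1 - u) * (1 * / (2 / 3 * Rmin u (1 - u)))).
    - apply Rmult_le_compat; auto using Rabs_pos.
      + apply Rmult_le_pos; [apply Rabs_pos|left; apply Rinv_0_lt_compat; lra].
      + apply Rmult_le_compat; auto using Rabs_pos.
        * left; apply Rinv_0_lt_compat; lra.
        * apply Rinv_le_contravar; lra.
    - right. field. lra. }
  pose proof (improper_main g y G (3 / 2 * M1) T Hg Hy HG Hyb Hy0 HTt HB) as Himp.
  exists (2 * T). split; [exact Himp|].
  intros eps Heps.
  assert (Hpk : 0 < (2 * PI) ^ k) by (apply pow_lt; pose proof PI_RGT_0; lra).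
  destruct (HT (eps / (2 * PI) ^ k)) as [N HN]; [apply Rdiv_lt_0_compat; lra|].
  exists N. intros n Hn. specialize (HN (S n) ltac:(clear -Hn; lia)).
  unfold R_dist in *. rewrite sum_f_R0_sumk.
  rewrite (sumk_ext _ (fun j => - (2 * PI) ^ k * y j)) by (intros j _; unfold y; apply Im_term; exact hb).
  rewrite sumk_scal.
  replace (- (2 * PI) ^ k * sumk y (S n) - - (2 * PI) ^ k / 2 * (2 * T)) with ((2 * PI) ^ k * (- (sumk y (S n) - T))) by (field).
  rewrite Rabs_mult, Rabs_Ropp, (Rabs_right ((2 * PI) ^ k)) by lra.
  apply (Rmult_lt_reg_r (/ (2 * PI) ^ k)); [apply Rinv_0_lt_compat; lra|].
  replace ((2 * PI) ^ k * Rabs (sumk y (S n) - T) * / (2 * PI) ^ k) with (Rabs (sumk y (S n) - T)) by (field; lra).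
  exact HN.
Qed.


Theorem mainTheorem2 (k : nat) (b : R) (hk : (2 <= k)%nat) (hb : b <> 0) :
  exists I : R,
    improper_integral_01 (integrand k b) I /\
    infinite_sum (fun j => Im (term k b j)) (- (2 * PI) ^ k / 2 * I).
Proof. exact (main_proof k b hk hb). Qed.
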